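(* Let $\mathcal{F}$ be a feature. For every weighted graph $(G,f)$, the functions $\sigma^{\mathcal{F}}_{(G,f)}$ and $\varrho^{\mathcal{F}}_{(G,f)}$ are categorical persistence functions; that is, $\sigma^{\mathcal{F}}$ and $\varrho^{\mathcal{F}}$ are ip-function generators.
   Context: Graphs are finite simple undirected graphs $G=(V,E)$; a weighted graph is $(G,f)$ with $f:E\to\mathbb{R}$. For $u\in\mathbb{R}$, $G_u=(V_u,E_u)$ is the subgraph of $G$ induced by the edge set $f^{-1}((-\infty,u])$ (vertices: endpoints of these edges), and $G_{+\infty}=G$. $\Delta^+=\{(u,v)\in\mathbb{R}\times(\mathbb{R}\cup\{+\infty\}): u<v\}$. A feature $\mathcal{F}$ assigns to every graph $H=(V_H,E_H)$ (in particular to every subgraph $G_w$) a function $2^{V_H\cup E_H}\to\{true,false\}$; $X$ is an $\mathcal{F}$-set of $H$ if $\mathcal{F}(X)=true$ in $H$. $X\subseteq V\cup E$ is an $\mathcal{F}$-set at level $w$ if it is an $\mathcal{F}$-set of $G_w$. $X$ is a steady $\mathcal{F}$-set at $(u,v)\in\Delta^+$ if it is an $\mathcal{F}$-set at all levels $w$ with $u\le w\le v$; it is a ranging $\mathcal{F}$-set at $(u,v)$ if there exist levels $w\le u$ and $w'\ge v$ at which it is an $\mathcal{F}$-set. Let $S^{\mathcal{F}}_{(G,f)}(u,v)$ and $R^{\mathcal{F}}_{(G,f)}(u,v)$ be the sets of steady, resp. ranging, $\mathcal{F}$-sets at $(u,v)$, and $\sigma^{\mathcal{F}}_{(G,f)}(u,v)=|S^{\mathcal{F}}_{(G,f)}(u,v)|$,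 $\varrho^{\mathcal{F}}_{(G,f)}(u,v)=|R^{\mathcal{F}}_{(G,f)}(u,v)|$. A categorical persistence function is a lower-bounded $p:\Delta^+\to\mathbb{Z}$ such that for all $u_1\le u_2<v_1\le v_2$: (1) $p(u_1,v_1)\le p(u_2,v_1)$ and $p(u_2,v_2)\le p(u_2,v_1)$; (2) $p(u_2,v_1)-p(u_1,v_1)\ge p(u_2,v_2)-p(u_1,v_2)$. *)

(* Defs.v *)
From HB Require Import structures.
From mathcomp Require Import all_boot all_order all_algebra.
From mathcomp Require Import boolp reals.
Set Implicit Arguments. Unset Strict Implicit. Unset Printing Implicit Defensive.
Import Order.TTheory GRing.Theory Num.Theory.
Local Open Scope ring_scope.

Section Defs.
Variable R : realType.

(* Extended levels R ∪ {+oo}: [Some r] is r, [None] is +oo. *)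
Definition ext_le (a b : option R) : bool :=
  match a, b with
  | _, None => true
  | None, Some _ => false
  | Some x, Some y => x <= y
  end.

Definition in_Delta (u : R) (v : option R) : bool := ext_le (Some u) v && (Some u != v).

(* Categorical persistence function p : Δ+ -> Z (values outside Δ+ irrelevant). *)
Definition categorical_persistence (p : R -> option R -> int) : Prop :=
  (exists m : int, forall u v, in_Delta u v -> m <= p u v) /\
  (forall (u1 u2 : R) (v1 v2 : option R),
      u1 <= u2 -> in_Delta u2 v1 -> ext_le v1 v2 ->
      [/\ p u1 v1 <= p u2 v1,
          p u2 v2 <= p u2 v1 &
          p u2 v2 - p u1 v2 <= p u2 v1 - p u1 v1]).

Variable V : finType.

(* Elements of a graph on vertex type V: vertices (inl) and edges (inr). *)
Definition elt := (V + {set V})%type.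

(* A feature, restricted to (sub)graphs with vertices in V: it takes a graph
   given by its vertex set and edge set, and a subset X of its elements. *)
Definition feature := {set V} -> {set {set V}} -> {set elt} -> bool.

Definition simple_graph (E : {set {set V}}) : Prop :=
  forall e, e \in E -> #|e| = 2%N.

Variables (E : {set {set V}}) (f : {set V} -> R).

Definition sub_edges (w : option R) : {set {set V}} :=
  match w with
  | None => E
  | Some r => [set e in E | f e <= r]
  end.

Definition sub_verts (w : option R) : {set V} :=
  match w with
  | None => [set: V]
  | Some r => \bigcup_(e in sub_edges (Some r)) e
  end.

Definition elements (Vs : {set V}) (Es : {set {set V}}) : {set elt} :=
  [set inl x | x in Vs] :|: [set inr e | e in Es].

Definition Fset_at (F : feature) (w : option R) (X : {set elt}) : Prop :=
  X \subset elements (sub_verts w) (sub_edges w) /\ F (sub_verts w) (sub_edges w) X.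

Definition steady (F : feature) (u : R) (v : option R) (X : {set elt}) : Prop :=
  forall w : option R, ext_le (Some u) w -> ext_le w v -> Fset_at F w X.

Definition ranging (F : feature) (u : R) (v : option R) (X : {set elt}) : Prop :=
  (exists w : R, w <= u /\ Fset_at F (Some w) X) /\
  (exists w' : option R, ext_le v w' /\ Fset_at F w' X).

Definition sigmaF (F : feature) (u : R) (v : option R) : int :=
  (#|[set X : {set elt} | `[< steady F u v X >]]|)%:Z.

Definition rhoF (F : feature) (u : R) (v : option R) : int :=
  (#|[set X : {set elt} | `[< ranging F u v X >]]|)%:Z.

End Defs.

(* Main.v *)
Require Import Defs.
From HB Require Import structures.
From mathcomp Require Import all_boot all_order all_algebra.
From mathcomp Require Import boolp reals.
From mathcomp Require Import zify.
Set Implicit Arguments. Unset Strict Implicit. Unset Printing Implicit Defensive.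
Import Order.TTheory GRing.Theory Num.Theory.
Local Open Scope ring_scope.

Lemma card_ineq (T : finType) (A1 A2 B1 B2 : {set T}) :
  A1 \subset A2 -> B2 \subset A2 -> B1 \subset B2 -> A1 :&: B2 \subset B1 ->
  (#|B2|%:Z - #|B1|%:Z <= #|A2|%:Z - #|A1|%:Z)%R.
Proof.
move=> h1 h2 h3 h4.
have e1 := cardsID A1 B2.
have e2 := cardsID A1 A2.
have l1 : (#|B2 :\: A1| <= #|A2 :\: A1|)%N by apply: subset_leq_card; apply: setSD.
have l2 : (#|B2 :&: A1| <= #|B1|)%N by apply: subset_leq_card; rewrite setIC.
have l3 := subset_leq_card h3.
rewrite (setIidPr h1) in e2.
lia.
Qed.

Lemma ext_le_trans (R : realType) (a b c : option R) :
  ext_le a b -> ext_le b c -> ext_le a c.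
Proof.
case: a => [a|]; case: b => [b|]; case: c => [c|] //=; exact: le_trans.
Qed.

Section P.
Variables (R : realType) (V : finType) (F : feature V)
  (E : {set {set V}}) (f : {set V} -> R).

Lemma cp_gen (p : R -> option R -> int) (S : R -> option R -> {set {set elt V}}) :
  (forall u v, p u v = #|S u v|%:Z) ->
  (forall u1 u2 v, u1 <= u2 -> S u1 v \subset S u2 v) ->
  (forall u v1 v2, ext_le v1 v2 -> S u v2 \subset S u v1) ->
  (forall u1 u2 v1 v2, u1 <= u2 -> in_Delta u2 v1 -> ext_le v1 v2 ->
     S u1 v1 :&: S u2 v2 \subset S u1 v2) ->
  categorical_persistence p.
Proof.
move=> hp m1 m2 m3; split.
  by exists 0 => u v _; rewrite hp.
move=> u1 u2 v1 v2 h12 hd hv; rewrite !hp; split.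
- by rewrite lez_nat; apply: subset_leq_card; apply: m1.
- by rewrite lez_nat; apply: subset_leq_card; apply: m2.
- apply: card_ineq; [exact: m1 | exact: m2 | exact: m1 | exact: m3].
Qed.

End P.

Theorem proposition2 (R : realType) (V : finType) (F : feature V)
  (E : {set {set V}}) (f : {set V} -> R) :
  simple_graph E ->
  categorical_persistence (sigmaF E f F) /\ categorical_persistence (rhoF E f F).
Proof.
move=> _; split.
- apply: (@cp_gen R V (sigmaF E f F)
     (fun u v => [set X : {set elt V} | `[< steady E f F u v X >]])) => //.
  + move=> u1 u2 v h; apply/subsetP => X; rewrite !inE => /asboolP H.
    apply/asboolP => w hw hv; apply: H => //; exact: (@ext_le_trans _ (Some u1) (Some u2) w h hw).
  + move=> u v1 v2 h; apply/subsetP => X; rewrite !inE => /asboolP H.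
    apply/asboolP => w hw hv; apply: H => //; exact: ext_le_trans hv h.
  + move=> u1 u2 v1 v2 h12 /andP[hd _] hv; apply/subsetP => X.
    rewrite !inE => /andP[/asboolP H1 /asboolP H2]; apply/asboolP => w hw hw2.
    case: w hw hw2 => [r|] hw hw2; last by apply: H2.
    have [hr|hr] := leP u2 r; first exact: (H2 (Some r) hr hw2).
    exact: (H1 (Some r) hw (@ext_le_trans _ (Some r) (Some u2) v1 (ltW hr) hd)).
- apply: (@cp_gen R V (rhoF E f F)
     (fun u v => [set X : {set elt V} | `[< ranging E f F u v X >]])) => //.
  + move=> u1 u2 v h; apply/subsetP => X; rewrite !inE => /asboolP [[w [hw H]] H'].
    by apply/asboolP; split => //; exists w; split => //; apply: le_trans h.
  + move=> u v1 v2 h; apply/subsetP => X; rewrite !inE => /asboolP [H [w [hw H']]].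
    by apply/asboolP; split => //; exists w; split => //; apply: ext_le_trans hw.
  + move=> u1 u2 v1 v2 h12 _ hv; apply/subsetP => X.
    rewrite !inE => /andP[/asboolP [H1 _] /asboolP [_ H2]].
    by apply/asboolP; split.
Qed.
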